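(* Let $G$ be a finite group, $V$ a finite-dimensional vector space over a field of positive characteristic $p$, and $\varphi:G\to GL(V)$ a representation. For $g\in G$, the coset $Vg$ in the semidirect product $V\rtimes_\varphi G$ contains an element of order $p|g|$ if and only if the Jordan form of $\varphi(g)$ has a unipotent Jordan block (block with eigenvalue $1$) of size $(|g|)_p$.
   Context: For a positive integer $a$, $(a)_p$ denotes the highest power of $p$ dividing $a$. *)

(* Defs.v *)
From HB Require Import structures.
From mathcomp Require Import all_boot all_order all_fingroup all_algebra.
From mathcomp Require Import mxrepresentation.
Set Implicit Arguments. Unset Strict Implicit. Unset Printing Implicit Defensive.
Import GRing.Theory.
Local Open Scope ring_scope.

(* V = 'rV[F]_n (row vectors), G acts on the right by v |-> v *m rG g.
   Elements of the semidirect product V x| G are pairs (v, g) ("v g")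
   with product (v, g) * (w, h) = (v *m rG h + w, g * h);
   identity (0, 1); the coset V g is {(v, g) | v in V}. *)
Section SemiDirect.
Variables (F : fieldType) (gT : finGroupType) (G : {group gT}) (n : nat).
Variable rG : mx_representation F G n.

Definition sd_mul (x y : 'rV[F]_n * gT) : 'rV[F]_n * gT :=
  (x.1 *m rG y.2 + y.1, (x.2 * y.2)%g).

Definition sd_one : 'rV[F]_n * gT := (0, 1%g).

Definition sd_pow (x : 'rV[F]_n * gT) (m : nat) : 'rV[F]_n * gT :=
  iter m (fun y => sd_mul y x) sd_one.

Definition sd_has_order (x : 'rV[F]_n * gT) (k : nat) : Prop :=
  (0 < k)%N /\ sd_pow x k = sd_one /\
  (forall m, (0 < m)%N -> (m < k)%N -> sd_pow x m <> sd_one).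
End SemiDirect.

Definition jordan1 (F : fieldType) (k : nat) : 'M[F]_k :=
  \matrix_(i < k, j < k) ((i == j)%:R + (j == i.+1 :> nat)%:R).

Definition has_unipotent_jordan_block (F : fieldType) (n : nat) (A : 'M[F]_n)
    (k : nat) : Prop :=
  exists m (e : (k + m = n)%N) (B : 'M[F]_m) (P : 'M[F]_n),
    P \in unitmx /\
    P *m A *m invmx P = castmx (e, e) (block_mx (jordan1 F k) 0 0 B).

(* Main.v *)
Require Import Defs.
From HB Require Import structures.
From mathcomp Require Import all_boot all_order all_fingroup all_algebra.
From mathcomp Require Import mxrepresentation.
From mathcomp Require Import cyclic zify.
Set Implicit Arguments. Unset Strict Implicit. Unset Printing Implicit Defensive.
Import GRing.Theory.
Local Open Scope ring_scope.

Lemma frob_pow (R : comNzRingType) p (chp : p \in [pchar R]) a (x : R) :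
  (x - 1) ^+ (p ^ a) = x ^+ (p ^ a) - 1.
Proof.
elim: a => [|a IH]; first by rewrite !expn0 !expr1.
rewrite expnSr !exprM IH -!(pFrobenius_autE chp) pFrobenius_autB_comm.
  by rewrite pFrobenius_aut1.
exact: commr1.
Qed.

Definition Phi (F : fieldType) (m : nat) : {poly F} := \sum_(j < m) 'X ^+ j.

Lemma S_fact (F : fieldType) p (chp : p \in [pchar F]) a m :
  \sum_(i < (p ^ a * m)%N) ('X : {poly F}) ^+ i =
  ('X - 1) ^+ (p ^ a).-1 * Phi F m ^+ (p ^ a).
Proof.
have Xn0 : ('X - 1 : {poly F}) != 0 by rewrite -polyC1 polyXsubC_eq0.
apply: (mulIf Xn0).
have chP : p \in [pchar {poly F}] by rewrite pchar_poly.
have q0 : (0 < p ^ a)%N by rewrite expn_gt0 (prime_gt0 (pcharf_prime chp)).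
rewrite [LHS]mulrC. rewrite -(subrX1 (polyX F)). rewrite mulrAC -exprSr prednK // -exprMn. rewrite /Phi -(subrX1 (polyX F)).
by rewrite frob_pow // -exprM mulnC.
Qed.

Lemma sd_powE (F : fieldType) (gT : finGroupType) (G : {group gT}) n'
  (rG : mx_representation F G n'.+1) (v : 'rV_n'.+1) g k :
  sd_pow rG (v, g) k = (v *m \sum_(i < k) rG g ^+ i, (g ^+ k)%g).
Proof.
elim: k => [|k IH]; first by rewrite /sd_pow /= big_ord0 mulmx0 expg0.
rewrite /sd_pow iterS -/(sd_pow rG (v, g) k) IH /sd_mul /=.
rewrite expgSr big_ord_recl expr0 mulmxDr mulmx1 addrC -mulmxA mulmx_suml.
congr (_ + v *m _, _); apply: eq_bigr => i _.
by rewrite exprSr mulmxE.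
Qed.

Lemma sum_mult (F : fieldType) n' (A : 'M[F]_n'.+1) o j :
  A ^+ o = 1 ->
  \sum_(i < (o * j)%N) A ^+ i = (\sum_(i < o) A ^+ i) *+ j.
Proof.
move=> Ao; elim: j => [|j IH]; first by rewrite muln0 big_ord0 mulr0n.
rewrite mulnS addnC big_split_ord IH mulrSr; congr (_ + _).
apply: eq_bigr => i _; by rewrite exprD exprM Ao expr1n mul1r.
Qed.

Lemma order_iff (F : fieldType) p (gT : finGroupType) (G : {group gT}) n'
  (rG : mx_representation F G n'.+1) (g : gT) (v : 'rV_n'.+1) :
  p \in [pchar F] -> g \in G ->
  sd_has_order rG (v, g) (p * #[g]%g)%N <->
  v *m \sum_(i < #[g]%g) rG g ^+ i != 0.
Proof.
move=> chp gG.
have pp := pcharf_prime chp.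
have Ao : rG g ^+ #[g]%g = 1 by rewrite -repr_mxX // expg_order repr_mx1.
have o0 : (0 < #[g]%g)%N := order_gt0 g.
set S := \sum_(i < #[g]%g) rG g ^+ i.
have powj j : sd_pow rG (v, g) (#[g]%g * j) = ((v *m S) *+ j, 1%g).
  by rewrite sd_powE sum_mult // -scaler_nat -scalemxAr scaler_nat expgM expg_order expg1n.
split.
  move=> [_ [_ Hmin]]; apply/negP => /eqP vS0.
  apply: (Hmin #[g]%g o0).
    by rewrite -{1}(mul1n #[g]%g) ltn_mul2r o0 prime_gt1.
  by rewrite -(muln1 #[g]%g) powj vS0 mulr1n.
move=> vS; split; first by rewrite muln_gt0 prime_gt0.
split.
  by rewrite mulnC powj -scaler_nat (pcharf0 chp) scale0r.
move=> k k0 kl; rewrite sd_powE /sd_one => -[Hv /eqP].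
rewrite -order_dvdn => /dvdnP [j kj]; subst k.
move: Hv; rewrite mulnC sum_mult // -scaler_nat -scalemxAr => /eqP.
rewrite scaler_eq0 (negPf vS) orbF -(dvdn_pcharf chp) => /dvdn_leq.
move: k0 kl; rewrite muln_gt0 ltn_mul2r o0 andbT andTb => j0 jp /(_ j0).
by rewrite leqNgt jp.
Qed.

Definition dl (F : fieldType) q (k : nat) : 'rV[F]_q := \row_(r < q) (r == k :> nat)%:R.

Lemma dl_big (F : fieldType) q k : (q <= k)%N -> dl F q k = 0.
Proof.
move=> h; apply/rowP => j; rewrite !mxE.
by have -> : (j == k :> nat) = false by apply/eqP => e; move: (ltn_ord j); rewrite e ltnNge h.
Qed.

Lemma dl_ord (F : fieldType) q (i : 'I_q) : dl F q i = delta_mx 0 i.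
Proof. by apply/rowP => j; rewrite !mxE. Qed.

Lemma dl_mul (F : fieldType) q k n (M : 'M[F]_(q, n)) (h : (k < q)%N) :
  dl F q k *m M = row (Ordinal h) M.
Proof. by rewrite (dl_ord F (Ordinal h)) rowE. Qed.

Lemma dl_jordan (F : fieldType) q k : dl F q k *m jordan1 F q = dl F q k + dl F q k.+1.
Proof.
apply/rowP => j; rewrite !mxE.
case: (ltnP k q) => h.
  rewrite (bigD1 (Ordinal h)) //= big1 ?addr0.
    rewrite !mxE eqxx mul1r eq_sym; exact: erefl.
  move=> r /eqP rk; rewrite !mxE.
  have -> : (r == k :> nat) = false by apply/eqP => e; apply: rk; apply: val_inj.
  by rewrite mul0r.
rewrite big1; last first.
  move=> r _; rewrite !mxE.
  have -> : (r == k :> nat) = false by apply/eqP => e; move: (ltn_ord r); rewrite e ltnNge h.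
  by rewrite mul0r.
have -> : (j == k :> nat) = false by apply/eqP => e; move: (ltn_ord j); rewrite e ltnNge h.
have -> : (j == k.+1 :> nat) = false by apply/eqP => e; move: (ltn_ord j); rewrite e ltnNge; lia.
by rewrite addr0.
Qed.

Lemma cast_out (F : fieldType) k m n (e : (k + m)%N = n) (A : 'M[F]_n)
    (B : 'M[F]_m) (P : 'M[F]_n) :
  P \in unitmx ->
  P *m A *m invmx P = castmx (e, e) (block_mx (jordan1 F k) 0 0 B) ->
  exists U : 'M[F]_(k, n), U *m A = jordan1 F k *m U /\
     forall i, row i U != 0.
Proof.
case: n / e A P => A P Pu; rewrite castmx_id => H.
have H2 : P *m A = block_mx (jordan1 F k) 0 0 B *m P by rewrite -H mulmxKV.
exists (usubmx P); split.
  have E := vsubmxK P; rewrite -E mul_block_col mul_col_mx in H2; move: H2.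
  by move/eq_col_mx => [-> _]; rewrite mul0mx addr0.
move=> i; apply/eqP => r0.
have : row (lshift m i) (P *m invmx P) = 0.
  by rewrite row_mul -{1}(vsubmxK P) rowKu r0 mul0mx.
rewrite mulmxV // row1 => /rowP /(_ (lshift m i)); rewrite !mxE !eqxx /=.
by move/eqP; rewrite oner_eq0.
Qed.

Lemma cast_in (F : fieldType) k m n (e : (k + m)%N = n) (A : 'M[F]_n)
    (B : 'M[F]_m) (P0 : 'M[F]_(k + m, n)) :
  row_free P0 -> P0 *m A = block_mx (jordan1 F k) 0 0 B *m P0 ->
  exists P : 'M[F]_n, P \in unitmx /\
    P *m A *m invmx P = castmx (e, e) (block_mx (jordan1 F k) 0 0 B).
Proof.
case: n / e A P0 => A P0 fr H; exists P0; rewrite castmx_id.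
have Pu : P0 \in unitmx by rewrite -row_free_unit.
by split => //; rewrite H mulmxK.
Qed.

Lemma evX (F : fieldType) n' (A : 'M[F]_n'.+1) k : horner_mx A ('X ^+ k) = A ^+ k.
Proof. by rewrite rmorphXn /= horner_mx_X. Qed.

Lemma evN (F : fieldType) n' (A : 'M[F]_n'.+1) k :
  horner_mx A (('X - 1) ^+ k) = (A - 1) ^+ k.
Proof. by rewrite rmorphXn rmorphB /= horner_mx_X rmorph1. Qed.

Lemma evSum (F : fieldType) n' (A : 'M[F]_n'.+1) k :
  horner_mx A (\sum_(i < k) 'X ^+ i) = \sum_(i < k) A ^+ i.
Proof. by rewrite rmorph_sum; apply: eq_bigr => i _; apply: evX. Qed.

Lemma vmulE (F : fieldType) r n' (v : 'M[F]_(r, n'.+1)) (M1 M2 : 'M[F]_n'.+1) :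
  v *m (M1 * M2) = v *m M1 *m M2.
Proof. by rewrite -mulmxE mulmxA. Qed.

Lemma fixed_pow (F : fieldType) r n' (A : 'M[F]_n'.+1) (y : 'M[F]_(r, n'.+1)) :
  y *m A = y -> forall k, y *m A ^+ k = y.
Proof.
move=> h; elim=> [|k IH]; first by rewrite expr0 mulmx1.
by rewrite exprSr vmulE IH h.
Qed.

Lemma dir1_core (F : fieldType) n' (A : 'M[F]_n'.+1) q (U : 'M[F]_(q, n'.+1)) :
  (0 < q)%N -> U *m A = jordan1 F q *m U -> (forall i, row i U != 0) ->
  exists b0 : 'rV[F]_n'.+1, b0 *m (A - 1) ^+ q.-1 != 0 /\ b0 *m (A - 1) ^+ q = 0.
Proof.
move=> q0 HU Hr.
pose b k := dl F q k *m U.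
have bA k : b k *m A = b k + b k.+1.
  by rewrite /b -mulmxA HU mulmxA dl_jordan mulmxDl.
have bN k : b k *m (A - 1) = b k.+1.
  by rewrite mulmxBr mulmx1 bA addrAC subrr add0r.
have bP k : b 0%N *m (A - 1) ^+ k = b k.
  elim: k => [|k IH]; first by rewrite expr0 mulmx1.
  by rewrite exprSr vmulE IH bN.
exists (b 0%N); rewrite !bP; split.
  have h : (q.-1 < q)%N by rewrite prednK.
  by rewrite /b (dl_mul _ h).
by rewrite /b dl_big // mul0mx.
Qed.

Lemma dir1 (F : fieldType) p (chp : p \in [pchar F]) n' (A : 'M[F]_n'.+1) a m :
  m%:R != 0 :> F ->
  has_unipotent_jordan_block A (p ^ a)%N ->
  \sum_(i < (p ^ a * m)%N) A ^+ i != 0.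
Proof.
move=> mn0 [m' [e [B [P [Pu HP]]]]].
have [U [HU Hr]] := cast_out Pu HP.
have q0 : (0 < p ^ a)%N by rewrite expn_gt0 (prime_gt0 (pcharf_prime chp)).
have [b0 [h1 h2]] := dir1_core q0 HU Hr.
rewrite -evSum S_fact // rmorphM /= evN rmorphXn /=.
apply/eqP => S0; move: h1.
set y := b0 *m (A - 1) ^+ (p ^ a).-1.
have yA : y *m A = y.
  apply/eqP; rewrite -subr_eq0 -{2}(mulmx1 y) -mulmxBr /y -vmulE -exprSr prednK //.
  by rewrite h2.
have yPhi : y *m horner_mx A (Phi F m) = y *+ m.
  rewrite /Phi evSum mulmx_sumr (eq_bigr (fun=> y)) => [|i _]; last exact: fixed_pow.
  by rewrite sumr_const card_ord.
have yPhik k : y *m horner_mx A (Phi F m) ^+ k = y *+ (m ^ k).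
  elim: k => [|k IH]; first by rewrite expr0 mulmx1 expn0.
  by rewrite exprSr vmulE IH -scaler_nat -scalemxAl yPhi scaler_nat -mulrnA expnS.
have := yPhik (p ^ a)%N; rewrite /y -vmulE S0 mulmx0 => /esym /eqP.
rewrite -scaler_nat scaler_eq0 natrX expf_eq0 (negPf mn0) andbF /= => /eqP ->.
by rewrite eqxx.
Qed.

Lemma exists_nz_row (F : fieldType) r n (S : 'M[F]_(r, n)) :
  S != 0 -> exists i, row i S != 0.
Proof.
move=> Sn0; case: (pickP (fun i => row i S != 0)) => [i Hi|none]; first by exists i.
case/eqP: Sn0; apply/row_matrixP => i; rewrite row0; apply/eqP.
by move: (none i) => /negbFE.
Qed.

Lemma exists_nz_entry (F : fieldType) n (y : 'rV[F]_n) :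
  y != 0 -> exists j, y 0 j != 0.
Proof.
move=> yn0; case: (pickP (fun j => y 0 j != 0)) => [j Hj|none]; first by exists j.
case/eqP: yn0; apply/rowP => j; rewrite mxE; apply/eqP.
by move: (none j) => /negbFE.
Qed.

Lemma dir2 (F : fieldType) p (chp : p \in [pchar F]) n' (A : 'M[F]_n'.+1) a m :
  m%:R != 0 :> F -> A ^+ (p ^ a * m)%N = 1 ->
  \sum_(i < (p ^ a * m)%N) A ^+ i != 0 ->
  has_unipotent_jordan_block A (p ^ a)%N.
Proof.
move=> mn0 Ao Sn0.
set q := (p ^ a)%N.
have q0 : (0 < q)%N by rewrite expn_gt0 (prime_gt0 (pcharf_prime chp)).
set N := A - 1.
set S := \sum_(i < (q * m)%N) A ^+ i.
set Ph := horner_mx A (Phi F m).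
have commP (P Q : {poly F}) : horner_mx A P * horner_mx A Q = horner_mx A Q * horner_mx A P.
  exact: comm_horner_mx2.
have NE k : N ^+ k = horner_mx A (('X - 1) ^+ k) by rewrite evN.
have PhE k : Ph ^+ k = horner_mx A (Phi F m ^+ k) by rewrite rmorphXn.
have SE : S = N ^+ q.-1 * Ph ^+ q.
  by rewrite /S -evSum S_fact // rmorphM /= evN rmorphXn.
have NS : N * S = 0 by rewrite /S /N -subrX1 Ao subrr.
have [i0 Hi0] := exists_nz_row Sn0.
set v : 'rV[F]_n'.+1 := delta_mx 0 i0.
have vS : v *m S != 0 by rewrite /v -rowE.
set w := v *m Ph ^+ q.
have w1 : w *m N ^+ q.-1 = v *m S.
  by rewrite /w -vmulE SE NE PhE commP.
have w2 : w *m N ^+ q = 0.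
  have Nq : N ^+ q = N * N ^+ q.-1 by rewrite -exprS prednK.
  rewrite /w -vmulE NE PhE commP -NE -PhE Nq -mulrA -SE NS mulmx0 //.
have w3 k : (q <= k)%N -> w *m N ^+ k = 0.
  by move=> h; rewrite -(subnKC h) exprD vmulE w2 mul0mx.
set Ep : {poly F} := (m%:R)^-1 *: \sum_(j < m) 'X ^+ (q * j).
set e := horner_mx A Ep.
have NqE : N ^+ q = A ^+ q - 1.
  have chP : p \in [pchar {poly F}] by rewrite pchar_poly.
  by rewrite NE frob_pow // rmorphB /= evX rmorph1.
have E1 x : x *m N ^+ q = 0 -> x *m e = x.
  rewrite NqE mulmxBr mulmx1 => /eqP; rewrite subr_eq0 => /eqP xq.
  rewrite /e /Ep linearZ /= rmorph_sum -scalemxAr mulmx_sumr.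
  rewrite (eq_bigr (fun=> x)) => [|j _]; last first.
    by rewrite /= evX exprM fixed_pow.
  by rewrite sumr_const card_ord -scaler_nat scalerA mulVf // scale1r.
have E2 : e * N ^+ q = 0.
  rewrite NE /e commP -NE NqE /Ep linearZ /= rmorph_sum -scalerAr.
  rewrite (eq_bigr (fun j : 'I_m => (A ^+ q) ^+ j)) => [|j _]; last first.
    by rewrite /= evX exprM.
  by rewrite -subrX1 -exprM Ao subrr scaler0.
have E3 k : (q <= k)%N -> e * N ^+ k = 0.
  by move=> h; rewrite -(subnKC h) exprD mulrA E2 mul0r.
have yn0 : w *m N ^+ q.-1 != 0 by rewrite w1.
have [jj Hjj] := exists_nz_entry yn0.
set t := fun k => (w *m N ^+ k) 0 jj.
pose K : 'M[F]_(n'.+1, q) := \matrix_(s, j) (e *m N ^+ j) s jj.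
have XK r (X : 'M[F]_(r, n'.+1)) s (j : 'I_q) : (X *m K) s j = (X *m (e *m N ^+ j)) s jj.
  by rewrite !mxE; apply: eq_bigr => k _; rewrite mxE.
pose Ub : 'M[F]_(q, n'.+1) := \matrix_(i < q) (w *m N ^+ i).
have bk k : dl F q k *m Ub = w *m N ^+ k.
  case: (ltnP k q) => h; first by rewrite (dl_mul _ h) rowK.
  by rewrite dl_big // mul0mx w3.
have wNe i j : w *m N ^+ i *m (e *m N ^+ j) = w *m N ^+ (i + j).
  rewrite mulmxA E1; first by rewrite exprD vmulE.
  by rewrite -vmulE -exprD addnC exprD vmulE w2 mul0mx.
have key (c : 'rV[F]_q) : c *m Ub *m K = 0 -> c = 0.
  move=> H.
  have H' (j : 'I_q) : \sum_(i < q) c 0 i * t (i + j)%N = 0.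
    transitivity ((c *m Ub *m K) 0 j); last by rewrite H mxE.
    rewrite XK (mulmx_sum_row c Ub) mulmx_suml summxE.
    by apply: eq_bigr => i _; rewrite rowK -scalemxAl wNe mxE.
  have tq k : (q <= k)%N -> t k = 0 by move=> h; rewrite /t w3 // mxE.
  suff cl k : forall i : 'I_q, (i < k)%N -> c 0 i = 0.
    by apply/rowP => i; rewrite mxE (cl q).
  elim: k => [//|k IH] i ik.
  case: (ltnP i k) => ik'; first exact: IH.
  have iE : nat_of_ord i = k by move: ik ik'; clear; lia.
  have hj : (q.-1 - i < q)%N by move: q0; clear; lia.
  have := H' (Ordinal hj); rewrite (bigD1 i) //= big1.
    rewrite addr0 subnKC; last by rewrite -ltnS prednK.
    by move/eqP; rewrite mulf_eq0 (negPf Hjj) orbF => /eqP.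
  move=> i' /eqP ii'.
  case: (ltnP i' i) => h; first by rewrite IH ?mul0r // -iE.
  rewrite tq ?mulr0 //.
  have : (i < i')%N by rewrite ltn_neqAle h andbT; apply/eqP => E; apply: ii'; apply: val_inj.
  move: (ltn_ord i); lia.
have keyM r (C : 'M[F]_(r, q)) : C *m Ub *m K = 0 -> C = 0.
  move=> H; apply/row_matrixP => i; rewrite row0; apply: key.
  by rewrite -!row_mul H row0.
have Ufree : row_free Ub.
  rewrite -kermx_eq0; apply/eqP; apply: keyM.
  by rewrite mulmx_ker mul0mx.
have commA k : A * (e * N ^+ k) = (e * N ^+ k) * A.
  rewrite NE /e -rmorphM /=.
  have := comm_horner_mx (Ep * ('X - 1) ^+ k) (erefl : comm_mx A A).
  by rewrite /comm_mx !mulmxE => ->.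
have inv r (Z : 'M[F]_(r, n'.+1)) : Z *m K = 0 -> Z *m A *m K = 0.
  move=> ZK.
  have Z0 k s : (Z *m (e *m N ^+ k)) s jj = 0.
    case: (ltnP k q) => h.
      by rewrite -(XK _ _ _ (Ordinal h)) ZK mxE.
    by rewrite mulmxE E3 // mulmx0 mxE.
  apply/matrixP => s j; rewrite XK -mulmxA.
  have -> : A *m (e *m N ^+ j) = e *m N ^+ j.+1 + e *m N ^+ j.
    rewrite !mulmxE commA -{1}(subrK 1 A) -/N mulrDr mulr1 -mulrA -exprSr //.
  rewrite mulmxDr mxE.
  by rewrite !Z0 addr0 mxE.
set Wb := row_base (kermx K).
have WK : Wb *m K = 0 by apply/sub_kermxP; rewrite eq_row_base.
have Winv : (Wb *m A <= Wb)%MS.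
  by rewrite eq_row_base; apply/sub_kermxP; apply: inv.
set B := Wb *m A *m pinvmx Wb.
have BW : B *m Wb = Wb *m A by rewrite /B mulmxKpV.
have UA : Ub *m A = jordan1 F q *m Ub.
  apply/row_matrixP => i; rewrite !row_mul rowK rowE -dl_ord dl_jordan mulmxDl !bk.
  by rewrite -{1}(subrK 1 A) -/N mulmxDr mulmx1 -vmulE -exprSr addrC.
have cap0 : (Ub :&: Wb)%MS = 0.
  set Y := (Ub :&: Wb)%MS.
  have YU : (Y <= Ub)%MS := capmxSl _ _.
  have YK : Y *m K = 0.
    apply/sub_kermxP; apply: submx_trans (capmxSr _ _) _; by rewrite eq_row_base.
  have YE := mulmxKpV YU.
  have C0 := keyM _ (Y *m pinvmx Ub).
  by rewrite -YE C0 ?mul0mx // YE.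
set m' := \rank (kermx K).
have rk : \rank (col_mx Ub Wb) = (q + m')%N.
  by rewrite -addsmxE mxrank_disjoint_sum // (eqP Ufree) eq_row_base.
have ee : (q + m')%N = n'.+1.
  have h1 := rank_leq_col (col_mx Ub Wb).
  have h2 := rank_leq_col K.
  have h3 := mxrank_ker K.
  rewrite rk in h1; rewrite -/m' in h3; lia.
have fr : row_free (col_mx Ub Wb) by rewrite /row_free rk.
have HP : col_mx Ub Wb *m A = block_mx (jordan1 F q) 0 0 B *m col_mx Ub Wb.
  by rewrite mul_col_mx mul_block_col !mul0mx addr0 add0r UA BW.
have [P [Pu HPP]] := cast_in ee fr HP.
by exists m', ee, B, P.
Qed.

Lemma sd_pow2 (F : fieldType) (gT : finGroupType) (G : {group gT}) n
  (rG : mx_representation F G n) (x : 'rV[F]_n * gT) k :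
  (sd_pow rG x k).2 = (x.2 ^+ k)%g.
Proof.
elim: k => [|k IH]; first by rewrite expg0.
by rewrite /sd_pow iterS -/(sd_pow rG x k) /sd_mul /= IH expgSr.
Qed.

Unset Implicit Arguments.
Theorem lemma1p12 (F : fieldType) (p : nat) (gT : finGroupType) (G : {group gT})
    (n : nat) (rG : mx_representation F G n) (g : gT) :
  (p \in [pchar F])%R -> g \in G ->
  (exists v : 'rV[F]_n, sd_has_order rG (v, g) (p * #[g]%g)%N) <->
  has_unipotent_jordan_block (rG g) (#[g]%g`_p)%N.
Proof.
move=> chp gG.
have pp := pcharf_prime chp.
have o0 : (0 < #[g]%g)%N := order_gt0 g.
case: n rG => [|n'] rG.
  split.
    move=> [v [_ [_ Hmin]]]; exfalso; apply: (Hmin #[g]%g o0).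
      by rewrite -{1}(mul1n #[g]%g) ltn_mul2r o0 prime_gt1.
    move E : (sd_pow rG (v, g) #[g]%g) => [x y].
    have := sd_pow2 rG (v, g) #[g]%g; rewrite E /= expg_order => ->.
    by rewrite /sd_one [x]thinmx0.
  move=> [m' [e _]]; exfalso; move: e.
  have : (0 < #[g]%g`_p)%N by rewrite part_gt0.
  lia.
set o := #[g]%g.
have Ao : rG g ^+ o = 1 by rewrite -repr_mxX // expg_order repr_mx1.
have mn0 : (o`_p^')%:R != 0 :> F.
  apply/eqP => h.
  have : (p %| o`_p^')%N by rewrite (dvdn_pcharf chp) h.
  move/pnat_dvd => /(_ _ (part_pnat _ _)).
  by rewrite pnatE // !inE eqxx.
have oE : o = (p ^ logn p o * o`_p^')%N by rewrite -p_part partnC.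
have qE : (o`_p)%N = (p ^ logn p o)%N by rewrite p_part.
split.
  move=> [v /(order_iff rG v chp gG) vS].
  rewrite qE; apply: (dir2 chp mn0); first by rewrite -oE.
  apply/eqP => S0; move: vS; rewrite -/o oE S0 mulmx0 eqxx //.
move=> Hj; rewrite qE in Hj.
have := dir1 chp mn0 Hj; rewrite -oE => Sn0.
have [i Hi] := exists_nz_row Sn0.
exists (delta_mx 0 i); apply/(order_iff rG _ chp gG).
by rewrite -rowE.
Qed.
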